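(* Let $P$ be a convergent periodic orbit with over-rotation pair $(nr,ns)$, where $n,r,s\in\mathbb{N}$, $\gcd(r,s)=1$ and $n>1$, and suppose the code of $P$ is non-decreasing. Then the $P$-linear map $f$ has no periodic orbit of over-rotation number less than $\frac rs$; in other words, $P$ does not force any periodic orbit of over-rotation number less than $\frac rs$.
   Context: For a cycle $P$ of a map $f$, the $P$-linear map agrees with $f$ on $P$ and is affine between consecutive points of $P$. $P$ is convergent if there are no $x<y$ in $P$ with $f(x)<x$, $f(y)>y$; then the $P$-linear map has a unique fixed point $a$. Over-rotation pair: for a cycle $P$ of period $q\ge2$, $2p$ is the number of $x\in P$ with $f(x)-x$ and $f^2(x)-f(x)$ of different signs; $orp(P)=(p,q)$, $\rho(P)=p/q$ (and similarly for non-fixed periodic orbits of $f$). Write $x>_a y$ if $x<y<a$ or $x>y>a$. Code: with $\rho=\rho(P)$ and $\varphi(y)=1$ if $y>a$ and $f(y)<a$, $\varphi(y)=0$ otherwise, the code $L:P\to\mathbb{R}$ is given by $L(x_0)=0$ for the leftmost point $x_0$ of $P$ and $L(f(y))=L(y)+\rho-\varphi(y)$. The code is non-decreasing if $x>_a y$ implies $L(x)\le L(y)$ for all $x,y\in P$. *)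

(* Defs.v *)
From Stdlib Require Import Reals Lra Lia.
Open Scope R_scope.

Definition itr (f : R -> R) (k : nat) (x : R) : R := Nat.iter k f x.

Definition least_period (f : R -> R) (x : R) (m : nat) : Prop :=
  (1 <= m)%nat /\ itr f m x = x /\
  (forall k : nat, (0 < k < m)%nat -> itr f k x <> x).

Definition leftmost_cycle (f : R -> R) (x0 : R) (q : nat) : Prop :=
  least_period f x0 q /\ (forall k : nat, (k < q)%nat -> x0 <= itr f k x0).

Definition P_linear (f : R -> R) (x0 : R) (q : nat) : Prop :=
  forall i j : nat, (i < q)%nat -> (j < q)%nat ->
    let a := itr f i x0 in let b := itr f j x0 in
    a < b ->
    (forall k : nat, (k < q)%nat -> ~ (a < itr f k x0 < b)) ->
    forall t : R, a <= t <= b ->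
      f t = f a + (f b - f a) / (b - a) * (t - a).

Definition convergent (f : R -> R) (x0 : R) (q : nat) : Prop :=
  ~ (exists i j : nat, (i < q)%nat /\ (j < q)%nat /\
       itr f i x0 < itr f j x0 /\
       f (itr f i x0) < itr f i x0 /\ f (itr f j x0) > itr f j x0).

Definition sign_change (f : R -> R) (x : R) : nat :=
  if Rlt_dec ((f x - x) * (f (f x) - f x)) 0 then 1%nat else 0%nat.

Fixpoint sign_change_count (f : R -> R) (x : R) (m : nat) : nat :=
  match m with
  | O => O
  | S m' => (sign_change_count f x m' + sign_change f (itr f m' x))%nat
  end.

Definition orp (f : R -> R) (x : R) (p q : nat) : Prop :=
  least_period f x q /\ (2 <= q)%nat /\ sign_change_count f x q = (2 * p)%nat.

Definition over_rotation_number (f : R -> R) (x : R) (m : nat) : R :=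
  INR (sign_change_count f x m) / (2 * INR m).

Definition phi (f : R -> R) (a y : R) : R :=
  if Rlt_dec a y then (if Rlt_dec (f y) a then 1 else 0) else 0.

Fixpoint phi_sum (f : R -> R) (a x0 : R) (k : nat) : R :=
  match k with
  | O => 0
  | S k' => phi_sum f a x0 k' + phi f a (itr f k' x0)
  end.

(* The code L along the cycle: L(f^k x0) = k*rho - sum_{j<k} phi(f^j x0),
   i.e. the solution of L(x0)=0, L(f y) = L(y) + rho - phi(y). *)
Definition code (f : R -> R) (a rho x0 : R) (k : nat) : R :=
  INR k * rho - phi_sum f a x0 k.

Definition gt_a (a x y : R) : Prop := (x < y < a) \/ (a < y < x).

Definition code_nondecreasing (f : R -> R) (a rho x0 : R) (q : nat) : Prop :=
  forall i j : nat, (i < q)%nat -> (j < q)%nat ->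
    gt_a a (itr f i x0) (itr f j x0) -> code f a rho x0 i <= code f a rho x0 j.

(* Main.v *)
Require Import Defs.
From Stdlib Require Import Reals Arith Lra Lia Psatz Classical.
Open Scope R_scope.

Lemma itr_add f p q x : itr f (p + q) x = itr f p (itr f q x).
Proof. unfold itr; apply Nat.iter_add. Qed.

Lemma itr_S f k x : itr f (S k) x = f (itr f k x).
Proof. reflexivity. Qed.

Lemma itr_fix f a k : f a = a -> itr f k a = a.
Proof. intro H; induction k; simpl; [reflexivity|]. change (f (itr f k a) = a). rewrite IHk; auto. Qed.

Definition hull f x0 N z := exists i j : nat, (i < N)%nat /\ (j < N)%nat /\
     itr f i x0 <= z <= itr f j x0.

Record Base f x0 a N : Prop := {
  bN : (2 <= N)%nat; blp : least_period f x0 N; blin : P_linear f x0 N;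
  bconv : convergent f x0 N; bfa : f a = a; bha : hull f x0 N a }.

Lemma inj f x0 a N i j : Base f x0 a N -> (i < N)%nat -> (j < N)%nat ->
  itr f i x0 = itr f j x0 -> i = j.
Proof.
  intros B Hi Hj E. destruct B as [_ [_ [HN Hk]] _ _ _ _].
  assert (forall i j, (i < j)%nat -> (j < N)%nat -> itr f i x0 = itr f j x0 -> False).
  { intros i' j' Hij Hj' E'.
    assert (itr f (N - j' + i') x0 = x0).
    { rewrite itr_add, E', <- itr_add. replace (N - j' + j')%nat with N by lia. auto. }
    apply (Hk (N - j' + i')%nat); [lia|auto]. }
  destruct (Nat.lt_trichotomy i j) as [h|[h|h]]; auto.
  - exfalso; eauto.
  - exfalso; eapply H; eauto.
Qed.

Lemma nofixP f x0 a N k : Base f x0 a N -> (k < N)%nat -> f (itr f k x0) <> itr f k x0.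
Proof.
  intros B Hk E. pose proof (bN _ _ _ _ B) as HN2.
  destruct (blp _ _ _ _ B) as [_ [HN Hk']].
  assert (itr f (N - k + k) x0 = itr f k x0).
  { rewrite itr_add. apply itr_fix. auto. }
  replace (N - k + k)%nat with N in H by lia. rewrite HN in H.
  apply (Hk' 1%nat); [lia|]. change (f x0 = x0). rewrite H at 1. rewrite E. auto.
Qed.

Lemma aNotP f x0 a N k : Base f x0 a N -> (k < N)%nat -> itr f k x0 <> a.
Proof. intros B Hk E. apply (nofixP f x0 a N k B Hk). rewrite E. apply (bfa _ _ _ _ B). Qed.

Lemma succ_idx f x0 a N rho i : Base f x0 a N -> (i < N)%nat ->
  exists j, (j < N)%nat /\ itr f j x0 = f (itr f i x0) /\
   (code f a rho x0 N = 0 -> code f a rho x0 j = code f a rho x0 i + rho - phi f a (itr f i x0)).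
Proof.
  intros B Hi. destruct (Nat.eq_dec (S i) N) as [e|ne].
  - exists 0%nat. split; [lia|]. split.
    + destruct (blp _ _ _ _ B) as [_ [HN _]]. rewrite <- e in HN. symmetry. exact HN.
    + intro H0. rewrite <- e in H0. unfold code in *. cbn [phi_sum] in *. rewrite S_INR in H0.
      replace (INR 0) with 0 by reflexivity. lra.
  - exists (S i). split; [lia|]. split; [reflexivity|]. intros _. unfold code. cbn [phi_sum]. rewrite S_INR. ring.
Qed.

Lemma maxl (h : nat -> R) N z : (exists i, (i < N)%nat /\ h i <= z) ->
  exists i, (i < N)%nat /\ h i <= z /\ forall k, (k < N)%nat -> h k <= z -> h k <= h i.
Proof.
  induction N as [|N IH]; intros [i [Hi Hz]]; [lia|].
  destruct (classic (exists i, (i < N)%nat /\ h i <= z)) as [E|E].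
  - destruct (IH E) as [j [Hj [Hjz Hm]]].
    destruct (Rle_dec (h N) z) as [hN|hN].
    + destruct (Rle_dec (h N) (h j)).
      * exists j; repeat split; auto. intros k Hk Hkz. destruct (Nat.eq_dec k N); [subst; auto|]. apply Hm; auto; lia.
      * exists N; repeat split; auto. intros k Hk Hkz. destruct (Nat.eq_dec k N); [subst; lra|]. specialize (Hm k ltac:(lia) Hkz). lra.
    + exists j; repeat split; auto. intros k Hk Hkz. destruct (Nat.eq_dec k N); [subst; lra|]. apply Hm; auto; lia.
  - assert (i = N) by (destruct (Nat.eq_dec i N); auto; exfalso; apply E; exists i; split; auto; lia). subst.
    exists N; repeat split; auto. intros k Hk Hkz. destruct (Nat.eq_dec k N); [subst; lra|]. exfalso; apply E; exists k; split; auto; lia.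
Qed.

Lemma minl (h : nat -> R) N z : (exists i, (i < N)%nat /\ z <= h i) ->
  exists i, (i < N)%nat /\ z <= h i /\ forall k, (k < N)%nat -> z <= h k -> h i <= h k.
Proof.
  intros [i [Hi Hz]]. destruct (maxl (fun k => - h k) N (- z)) as [j [Hj [Hjz Hm]]].
  - exists i; split; auto; lra.
  - exists j; repeat split; auto; try lra. intros k Hk Hkz. specialize (Hm k Hk ltac:(lra)). lra.
Qed.

Definition inP f x0 N z := exists i, (i < N)%nat /\ itr f i x0 = z.

Lemma bracket f x0 N z : hull f x0 N z -> ~ inP f x0 N z ->
  exists ip iq, (ip < N)%nat /\ (iq < N)%nat /\ itr f ip x0 < z < itr f iq x0 /\
   (forall k, (k < N)%nat -> ~ (itr f ip x0 < itr f k x0 < itr f iq x0)) /\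
   (forall k, (k < N)%nat -> itr f k x0 <= z -> itr f k x0 <= itr f ip x0) /\
   (forall k, (k < N)%nat -> z <= itr f k x0 -> itr f iq x0 <= itr f k x0).
Proof.
  intros [i [j [Hi [Hj [H1 H2]]]]] NP.
  assert (ne : forall k, (k < N)%nat -> itr f k x0 <> z) by (intros k Hk E; apply NP; exists k; auto).
  destruct (maxl (fun k => itr f k x0) N z) as [ip [Hip [Hpz Hp]]]; [exists i; auto|].
  destruct (minl (fun k => itr f k x0) N z) as [iq [Hiq [Hqz Hq]]]; [exists j; auto|].
  exists ip, iq. specialize (ne ip Hip) as n1. specialize (ne iq Hiq) as n2.
  repeat split; auto; try lra.
  intros k Hk [a1 a2]. specialize (ne k Hk).
  destruct (Rle_dec (itr f k x0) z).
  - specialize (Hp k Hk r). simpl in Hp. lra.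
  - specialize (Hq k Hk ltac:(lra)). simpl in Hq. lra.
Qed.

Lemma affine f x0 N ip iq : P_linear f x0 N -> (ip < N)%nat -> (iq < N)%nat ->
  itr f ip x0 < itr f iq x0 ->
  (forall k, (k < N)%nat -> ~ (itr f ip x0 < itr f k x0 < itr f iq x0)) ->
  exists c, forall t, itr f ip x0 <= t <= itr f iq x0 ->
    f t = f (itr f ip x0) + c * (t - itr f ip x0).
Proof.
  intros Hl Hp Hq Hlt Hn. eexists. intros t Ht. apply (Hl ip iq Hp Hq Hlt Hn t Ht).
Qed.
Lemma interp_pos p q u fp c : p <= u <= q -> p < q -> fp - p > 0 -> fp + c * (q - p) - q > 0 ->
  fp + c * (u - p) - u > 0.
Proof.
  intros Hu Hpq H1 H2.
  assert (E : (q - p) * (fp + c * (u - p) - u) = (q - u) * (fp - p) + (u - p) * (fp + c * (q - p) - q)) by ring.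
  assert (0 <= (q - u) * (fp - p)) by (apply Rmult_le_pos; lra).
  assert (0 <= (u - p) * (fp + c * (q - p) - q)) by (apply Rmult_le_pos; lra).
  destruct (Rle_lt_dec (fp + c * (u - p) - u) 0); auto.
  assert ((q - p) * (fp + c * (u - p) - u) <= 0) by nra.
  destruct (Req_dec u p). subst; lra.
  assert (0 < (u - p) * (fp + c * (q - p) - q)) by (apply Rmult_lt_0_compat; lra). lra.
Qed.

Lemma interp_neg p q u fp c : p <= u <= q -> p < q -> fp - p < 0 -> fp + c * (q - p) - q < 0 ->
  fp + c * (u - p) - u < 0.
Proof.
  intros Hu Hpq H1 H2.
  pose proof (interp_pos (-q) (-p) (-u) (- (fp + c * (q - p))) c ltac:(lra) ltac:(lra) ltac:(lra) ltac:(lra)).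
  replace (- (fp + c * (q - p)) + c * (- u - - q) - - u) with (-(fp + c * (u - p) - u)) in H by ring. lra.
Qed.

Lemma Psign f x0 a N k : Base f x0 a N -> (k < N)%nat ->
  (itr f k x0 < a -> f (itr f k x0) > itr f k x0) /\ (a < itr f k x0 -> f (itr f k x0) < itr f k x0).
Proof.
  intros B Hk.
  assert (NPa : ~ inP f x0 N a) by (intros [i [Hi E]]; eapply aNotP; eauto).
  destruct (bracket f x0 N a (bha _ _ _ _ B) NPa) as [ip [iq [Hip [Hiq [[Hpa Haq] [Hcons [Hmax Hmin]]]]]]].
  destruct (affine f x0 N ip iq (blin _ _ _ _ B) Hip Hiq ltac:(lra) Hcons) as [c Hc].
  pose proof (bfa _ _ _ _ B) as Hfa. pose proof (Hc a ltac:(lra)) as Ea.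
  pose proof (Hc (itr f iq x0) ltac:(lra)) as Eq.
  pose proof (nofixP f x0 a N k B Hk) as nk.
  pose proof (nofixP f x0 a N ip B Hip) as np.
  pose proof (nofixP f x0 a N iq B Hiq) as nq.
  pose proof (bconv _ _ _ _ B) as Hcv.
  split; intro Hs.
  - destruct (Rlt_le_dec (itr f k x0) (f (itr f k x0))) as [h|h]; [lra|].
    assert (h' : f (itr f k x0) < itr f k x0) by lra.
    assert (fp : f (itr f ip x0) < itr f ip x0).
    { destruct (Req_dec (itr f k x0) (itr f ip x0)) as [e|e]. rewrite <- e; auto.
      assert (itr f k x0 < itr f ip x0) by (specialize (Hmax k Hk ltac:(lra)); lra).
      destruct (Rlt_le_dec (itr f ip x0) (f (itr f ip x0))); [|lra].
      exfalso; apply Hcv; exists k, ip; repeat split; auto; lra. }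
    assert (fq : f (itr f iq x0) < itr f iq x0).
    { destruct (Rlt_le_dec (itr f iq x0) (f (itr f iq x0))); [|lra].
      exfalso; apply Hcv; exists k, iq; repeat split; auto; lra. }
    pose proof (interp_neg (itr f ip x0) (itr f iq x0) a (f (itr f ip x0)) c ltac:(lra) ltac:(lra) ltac:(lra) ltac:(lra)).
    lra.
  - destruct (Rlt_le_dec (f (itr f k x0)) (itr f k x0)) as [h|h]; [lra|].
    assert (h' : f (itr f k x0) > itr f k x0) by lra.
    assert (fq : f (itr f iq x0) > itr f iq x0).
    { destruct (Req_dec (itr f k x0) (itr f iq x0)) as [e|e]. rewrite <- e; auto.
      assert (itr f iq x0 < itr f k x0) by (specialize (Hmin k Hk ltac:(lra)); lra).
      destruct (Rlt_le_dec (f (itr f iq x0)) (itr f iq x0)); [|lra].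
      exfalso; apply Hcv; exists iq, k; repeat split; auto; lra. }
    assert (fp : f (itr f ip x0) > itr f ip x0).
    { destruct (Rlt_le_dec (f (itr f ip x0)) (itr f ip x0)); [|lra].
      exfalso; apply Hcv; exists ip, k; repeat split; auto; lra. }
    pose proof (interp_pos (itr f ip x0) (itr f iq x0) a (f (itr f ip x0)) c ltac:(lra) ltac:(lra) ltac:(lra) ltac:(lra)).
    lra.
Qed.
Lemma gsign f x0 a N u : Base f x0 a N -> hull f x0 N u -> u <> a ->
  (u < a -> f u > u) /\ (a < u -> f u < u).
Proof.
  intros B Hu Hna. pose proof (bfa _ _ _ _ B) as Hfa.
  destruct (classic (inP f x0 N u)) as [[i [Hi E]]|NP].
  - subst u. apply (Psign f x0 a N i B Hi).
  - destruct (bracket f x0 N u Hu NP) as [ip [iq [Hip [Hiq [[Hpu Huq] [Hcons [Hmax Hmin]]]]]]].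
    destruct (affine f x0 N ip iq (blin _ _ _ _ B) Hip Hiq ltac:(lra) Hcons) as [c Hc].
    pose proof (Hc u ltac:(lra)) as Eu.
    pose proof (Hc (itr f iq x0) ltac:(lra)) as Eq.
    pose proof (aNotP f x0 a N ip B Hip) as ap.
    pose proof (aNotP f x0 a N iq B Hiq) as aq.
    pose proof (Psign f x0 a N ip B Hip) as [sp1 sp2].
    pose proof (Psign f x0 a N iq B Hiq) as [sq1 sq2].
    split; intro Hs.
    + destruct (Rlt_le_dec (itr f iq x0) a).
      * pose proof (interp_pos (itr f ip x0) (itr f iq x0) u (f (itr f ip x0)) c ltac:(lra) ltac:(lra) ltac:(lra) ltac:(lra)). lra.
      * pose proof (Hc a ltac:(lra)) as Ea. specialize (sp1 ltac:(lra)).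
        set (p := itr f ip x0) in *. set (fp := f p) in *.
        assert (1 - c > 0).
        { destruct (Rle_lt_dec (1 - c) 0); auto. assert ((1 - c) * (a - p) <= 0) by nra. nra. }
        assert ((1 - c) * (a - u) > 0) by (apply Rmult_lt_0_compat; lra). nra.
    + destruct (Rlt_le_dec a (itr f ip x0)).
      * pose proof (interp_neg (itr f ip x0) (itr f iq x0) u (f (itr f ip x0)) c ltac:(lra) ltac:(lra) ltac:(lra) ltac:(lra)). lra.
      * pose proof (Hc a ltac:(lra)) as Ea. specialize (sq2 ltac:(lra)).
        set (p := itr f ip x0) in *. set (q := itr f iq x0) in *. set (fp := f p) in *.
        assert (1 - c > 0).
        { destruct (Rle_lt_dec (1 - c) 0); auto. assert ((1 - c) * (q - a) <= 0) by nra. nra. }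
        assert ((1 - c) * (u - a) > 0) by (apply Rmult_lt_0_compat; lra). nra.
Qed.

Lemma between fp c p z q : p <= z <= q ->
  (fp <= fp + c * (z - p) <= fp + c * (q - p)) \/ (fp + c * (q - p) <= fp + c * (z - p) <= fp).
Proof.
  intros Hz. destruct (Rle_lt_dec 0 c).
  - left. split; nra.
  - right. split; nra.
Qed.

Lemma hull_inv f x0 a N z : Base f x0 a N -> hull f x0 N z -> hull f x0 N (f z).
Proof.
  intros B Hz.
  destruct (classic (inP f x0 N z)) as [[i [Hi E]]|NP].
  - subst z. destruct (succ_idx f x0 a N 0 i B Hi) as [j [Hj [Ej _]]].
    exists j, j. rewrite Ej. repeat split; auto; lra.
  - destruct (bracket f x0 N z Hz NP) as [ip [iq [Hip [Hiq [[Hpu Huq] [Hcons [Hmax Hmin]]]]]]].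
    destruct (affine f x0 N ip iq (blin _ _ _ _ B) Hip Hiq ltac:(lra) Hcons) as [c Hc].
    pose proof (Hc z ltac:(lra)) as Ez.
    pose proof (Hc (itr f iq x0) ltac:(lra)) as Eq.
    destruct (succ_idx f x0 a N 0 ip B Hip) as [jp [Hjp [Ejp _]]].
    destruct (succ_idx f x0 a N 0 iq B Hiq) as [jq [Hjq [Ejq _]]].
    destruct (between (f (itr f ip x0)) c (itr f ip x0) z (itr f iq x0) ltac:(lra)) as [h|h];
      rewrite <- Ez, <- Eq in h.
    + exists jp, jq. rewrite Ejp, Ejq. auto.
    + exists jq, jp. rewrite Ejp, Ejq. auto.
Qed.
Lemma orbit_hull f x0 a N y : Base f x0 a N -> hull f x0 N y -> forall k, hull f x0 N (itr f k y).
Proof. intros B H k; induction k; [exact H|]. rewrite itr_S. eapply hull_inv; eauto. Qed.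

Lemma orbit_na f x0 a N y m : Base f x0 a N -> least_period f y m -> (2 <= m)%nat ->
  forall k, (k <= m)%nat -> itr f k y <> a.
Proof.
  intros B [_ [Hm Hk]] H2 k Hkm E.
  assert (itr f (m - k + k) y = a) by (rewrite itr_add, E; apply itr_fix, (bfa _ _ _ _ B)).
  replace (m - k + k)%nat with m in H by lia. rewrite Hm in H.
  apply (Hk 1%nat); [lia|]. change (f y = y). rewrite H. apply (bfa _ _ _ _ B).
Qed.

Definition sd (a u : R) : R := if Rlt_dec a u then 1 else 0.

Lemma sc_step f x0 a N u : Base f x0 a N -> hull f x0 N u -> u <> a -> f u <> a ->
  INR (sign_change f u) + sd a u = 2 * phi f a u + sd a (f u).
Proof.
  intros B Hu n1 n2.
  pose proof (gsign f x0 a N u B Hu n1) as [s1 s2].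
  pose proof (gsign f x0 a N (f u) B (hull_inv f x0 a N u B Hu) n2) as [t1 t2].
  unfold sign_change, phi, sd.
  destruct (Rlt_dec a u); destruct (Rlt_dec a (f u)).
  - specialize (s2 r); specialize (t2 r0).
    destruct (Rlt_dec (f u) a); [lra|].
    destruct (Rlt_dec ((f u - u) * (f (f u) - f u)) 0); [nra|]. simpl; lra.
  - specialize (s2 r); specialize (t1 ltac:(lra)).
    destruct (Rlt_dec (f u) a); [|lra].
    destruct (Rlt_dec ((f u - u) * (f (f u) - f u)) 0); [|nra]. simpl; lra.
  - specialize (s1 ltac:(lra)); specialize (t2 r).
    destruct (Rlt_dec ((f u - u) * (f (f u) - f u)) 0); [|nra]. simpl; lra.
  - specialize (s1 ltac:(lra)); specialize (t1 ltac:(lra)).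
    destruct (Rlt_dec ((f u - u) * (f (f u) - f u)) 0); [nra|]. simpl; lra.
Qed.

Lemma count_eq f x0 a N y m : Base f x0 a N -> hull f x0 N y -> least_period f y m -> (2 <= m)%nat ->
  INR (sign_change_count f y m) = 2 * phi_sum f a y m.
Proof.
  intros B Hy Hl H2.
  assert (forall k, (k <= m)%nat -> INR (sign_change_count f y k) + sd a y = 2 * phi_sum f a y k + sd a (itr f k y)).
  { induction k; intros Hk.
    - simpl. lra.
    - cbn [sign_change_count phi_sum]. rewrite plus_INR, itr_S.
      pose proof (sc_step f x0 a N (itr f k y) B (orbit_hull f x0 a N y B Hy k)
         (orbit_na f x0 a N y m B Hl H2 k ltac:(lia)) (orbit_na f x0 a N y m B Hl H2 (S k) Hk)).
      specialize (IHk ltac:(lia)). lra. }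
  specialize (H m (le_n m)). destruct Hl as [_ [Hm _]]. rewrite Hm in H. lra.
Qed.
Fixpoint Lmr f a rho x0 m : R := match m with
  | O => code f a rho x0 0
  | S m' => Rmin (Lmr f a rho x0 m') (code f a rho x0 m') end.

Definition qual a g x := (x < a /\ g <= x) \/ (a < x /\ x <= g).
Definition qualb a g x : bool :=
  if Rlt_dec x a then (if Rle_dec g x then true else false)
  else if Rlt_dec a x then (if Rle_dec x g then true else false) else false.

Lemma qualb_spec a g x : qualb a g x = true <-> qual a g x.
Proof.
  unfold qualb, qual. destruct (Rlt_dec x a); [destruct (Rle_dec g x)|destruct (Rlt_dec a x); [destruct (Rle_dec x g)|]];
  split; intro H; try discriminate; auto; try lra; destruct H; lra.
Qed.

Fixpoint Dr f a rho x0 (base x : R) m : R := match m with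
  | O => base
  | S m' => if qualb a (itr f m' x0) x then Rmax (Dr f a rho x0 base x m') (code f a rho x0 m')
            else Dr f a rho x0 base x m' end.

Lemma Lmr_le f a rho x0 m k : (k < m)%nat -> Lmr f a rho x0 m <= code f a rho x0 k.
Proof.
  induction m; intros H; [lia|]. simpl.
  destruct (Nat.eq_dec k m). subst; apply Rmin_r.
  eapply Rle_trans; [apply Rmin_l|]. apply IHm; lia.
Qed.

Lemma Dr_ge f a rho x0 base x m k : (k < m)%nat -> qual a (itr f k x0) x ->
  code f a rho x0 k <= Dr f a rho x0 base x m.
Proof.
  induction m; intros H Q; [lia|]. simpl.
  destruct (Nat.eq_dec k m).
  - subst. apply qualb_spec in Q. rewrite Q. apply Rmax_r.
  - destruct (qualb a (itr f m x0) x).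
    + eapply Rle_trans; [apply IHm; auto; lia|apply Rmax_l].
    + apply IHm; auto; lia.
Qed.

Lemma Dr_le f a rho x0 base x m c : base <= c ->
  (forall k, (k < m)%nat -> qual a (itr f k x0) x -> code f a rho x0 k <= c) ->
  Dr f a rho x0 base x m <= c.
Proof.
  induction m; intros Hb H; simpl; auto.
  assert (IH : Dr f a rho x0 base x m <= c) by (apply IHm; auto).
  destruct (qualb a (itr f m x0) x) eqn:E; auto.
  apply Rmax_lub; auto. apply H; auto. apply qualb_spec; auto.
Qed.

Lemma phi_l f a u : u < a -> phi f a u = 0.
Proof. intros; unfold phi; destruct (Rlt_dec a u); lra. Qed.
Lemma phi_r1 f a u : a < u -> f u < a -> phi f a u = 1.
Proof. intros; unfold phi; destruct (Rlt_dec a u); [|lra]; destruct (Rlt_dec (f u) a); lra. Qed.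
Lemma phi_r0 f a u : a < u -> a < f u -> phi f a u = 0.
Proof. intros; unfold phi; destruct (Rlt_dec a u); [|lra]; destruct (Rlt_dec (f u) a); lra. Qed.

Lemma mono f x0 a N rho k i : Base f x0 a N -> code_nondecreasing f a rho x0 N ->
  (k < N)%nat -> (i < N)%nat ->
  (itr f k x0 <= itr f i x0 < a \/ a < itr f i x0 <= itr f k x0) ->
  code f a rho x0 k <= code f a rho x0 i.
Proof.
  intros B Hc Hk Hi H.
  destruct (Req_dec (itr f k x0) (itr f i x0)) as [e|e].
  - rewrite (inj f x0 a N k i B Hk Hi e). lra.
  - apply Hc; auto. unfold gt_a. lra.
Qed.
Definition Dx f a rho x0 N x := Dr f a rho x0 (Lmr f a rho x0 N) x N.

Lemma key f x0 a N rho z : Base f x0 a N -> code f a rho x0 N = 0 ->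
  code_nondecreasing f a rho x0 N -> hull f x0 N z -> z <> a -> f z <> a ->
  Dx f a rho x0 N (f z) >= Dx f a rho x0 N z + rho - phi f a z.
Proof.
  intros B HN Hc Hz n1 n2. unfold Dx.
  pose proof (bfa _ _ _ _ B) as Hfa.
  destruct (classic (inP f x0 N z)) as [[i [Hi E]]|NP].
  - subst z. destruct (succ_idx f x0 a N rho i B Hi) as [j [Hj [Ej Cj]]]. specialize (Cj HN).
    assert (code f a rho x0 j <= Dr f a rho x0 (Lmr f a rho x0 N) (f (itr f i x0)) N).
    { apply Dr_ge; auto. rewrite Ej. unfold qual.
      destruct (Rlt_le_dec (f (itr f i x0)) a); [left|right]; lra. }
    assert (Dr f a rho x0 (Lmr f a rho x0 N) (itr f i x0) N <= code f a rho x0 i).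
    { apply Dr_le. apply Lmr_le; auto. intros k Hk Q. apply (mono f x0 a N rho k i B Hc Hk Hi).
      unfold qual in Q. lra. }
    lra.
  - destruct (bracket f x0 N z Hz NP) as [ip [iq [Hip [Hiq [[Hpz Hzq] [Hcons [Hmax Hmin]]]]]]].
    destruct (affine f x0 N ip iq (blin _ _ _ _ B) Hip Hiq ltac:(lra) Hcons) as [c Hcf].
    pose proof (Hcf z ltac:(lra)) as Ez.
    pose proof (Hcf (itr f iq x0) ltac:(lra)) as Eq.
    destruct (succ_idx f x0 a N rho ip B Hip) as [jp [Hjp [Ejp Cp]]]. specialize (Cp HN).
    destruct (succ_idx f x0 a N rho iq B Hiq) as [jq [Hjq [Ejq Cq]]]. specialize (Cq HN).
    pose proof (aNotP f x0 a N ip B Hip) as ap.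
    pose proof (aNotP f x0 a N iq B Hiq) as aq.
    set (Dfz := Dr f a rho x0 (Lmr f a rho x0 N) (f z) N).
    assert (Gp : qual a (f (itr f ip x0)) (f z) -> code f a rho x0 jp <= Dfz).
    { intro Q. apply Dr_ge; auto. rewrite Ejp; auto. }
    assert (Gq : qual a (f (itr f iq x0)) (f z) -> code f a rho x0 jq <= Dfz).
    { intro Q. apply Dr_ge; auto. rewrite Ejq; auto. }
    assert (Lp : z < a -> Dr f a rho x0 (Lmr f a rho x0 N) z N <= code f a rho x0 ip).
    { intro za. apply Dr_le. apply Lmr_le; auto. intros k Hk Q. apply (mono f x0 a N rho k ip B Hc Hk Hip).
      unfold qual in Q. assert (itr f k x0 <= itr f ip x0) by (apply Hmax; auto; lra). lra. }
    assert (Lq : a < z -> Dr f a rho x0 (Lmr f a rho x0 N) z N <= code f a rho x0 iq).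
    { intro za. apply Dr_le. apply Lmr_le; auto. intros k Hk Q. apply (mono f x0 a N rho k iq B Hc Hk Hiq).
      unfold qual in Q. assert (itr f iq x0 <= itr f k x0) by (apply Hmin; auto; lra). lra. }
    pose proof (between (f (itr f ip x0)) c (itr f ip x0) z (itr f iq x0) ltac:(lra)) as Bt.
    rewrite <- Ez, <- Eq in Bt.
    set (p := itr f ip x0) in *. set (q := itr f iq x0) in *.
    destruct (Rlt_le_dec q a) as [qa|qa]; [|destruct (Rlt_le_dec a p) as [pa|pa]].
    +
      assert (za : z < a) by lra. rewrite (phi_l f a z za) in *.
      rewrite (phi_l f a p ltac:(lra)) in Cp. rewrite (phi_l f a q ltac:(lra)) in Cq.
      assert (code f a rho x0 ip <= code f a rho x0 iq) by (apply (mono f x0 a N rho ip iq B Hc Hip Hiq); fold p q; left; lra).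
      specialize (Lp za).
      assert (Dfz >= code f a rho x0 ip + rho).
      { destruct (Rlt_le_dec (f z) a).
        - destruct Bt as [h|h].
          + specialize (Gp ltac:(left; lra)); lra.
          + specialize (Gq ltac:(left; lra)); lra.
        - destruct Bt as [h|h].
          + specialize (Gq ltac:(right; lra)); lra.
          + specialize (Gp ltac:(right; lra)); lra. }
      lra.
    +
      assert (za : a < z) by lra.
      assert (code f a rho x0 iq <= code f a rho x0 ip) by (apply (mono f x0 a N rho iq ip B Hc Hiq Hip); fold p q; right; lra).
      specialize (Lq za).
      destruct (Rlt_le_dec (f z) a).
      * rewrite (phi_r1 f a z za ltac:(lra)).
        destruct Bt as [h|h].
        -- rewrite (phi_r1 f a p ltac:(lra) ltac:(lra)) in Cp. specialize (Gp ltac:(left; lra)); lra.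
        -- rewrite (phi_r1 f a q ltac:(lra) ltac:(lra)) in Cq. specialize (Gq ltac:(left; lra)); lra.
      * assert (fza : a < f z) by lra. rewrite (phi_r0 f a z za fza).
        destruct Bt as [h|h].
        -- rewrite (phi_r0 f a q ltac:(lra) ltac:(lra)) in Cq. specialize (Gq ltac:(right; lra)); lra.
        -- rewrite (phi_r0 f a p ltac:(lra) ltac:(lra)) in Cp. specialize (Gp ltac:(right; lra)); lra.
    +
      assert (pa' : p < a) by (destruct (Req_dec p a); [exfalso; auto|lra]).
      assert (qa' : a < q) by (destruct (Req_dec q a); [exfalso; auto|lra]).
      pose proof (Psign f x0 a N ip B Hip) as [sp _]. specialize (sp pa').
      pose proof (Psign f x0 a N iq B Hiq) as [_ sq]. specialize (sq qa'). fold p in sp. fold q in sq.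
      assert (fpq : q <= f p).
      { rewrite <- Ejp in sp |- *. destruct (Rle_lt_dec q (itr f jp x0)); auto.
        exfalso; apply (Hcons jp Hjp); fold p q; split; lra. }
      assert (fqp : f q <= p).
      { rewrite <- Ejq in sq |- *. destruct (Rle_lt_dec (itr f jq x0) p); auto.
        exfalso; apply (Hcons jq Hjq); fold p q; split; lra. }
      pose proof (Hcf a ltac:(lra)) as Ea. fold p in Ea.
      assert (cneg : c < 0).
      { destruct (Rlt_le_dec c 0); auto. assert (c * (a - p) >= 0) by nra. lra. }
      destruct (Rlt_le_dec z a) as [za|za].
      * rewrite (phi_l f a z za). rewrite (phi_l f a p pa') in Cp. specialize (Lp za).
        assert (f z - a = c * (z - a)) by lra.
        assert (c * (z - a) > 0) by nra.
        assert (f p - f z = c * (p - z)) by lra.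
        assert (c * (p - z) >= 0) by nra.
        specialize (Gp ltac:(right; lra)). lra.
      * assert (za' : a < z) by (destruct (Req_dec z a); [exfalso; auto|lra]).
        assert (f z - a = c * (z - a)) by lra.
        assert (c * (z - a) < 0) by nra.
        rewrite (phi_r1 f a z za' ltac:(lra)). rewrite (phi_r1 f a q qa' ltac:(lra)) in Cq.
        specialize (Lq za').
        assert (f z - f q = c * (z - q)) by lra.
        assert (c * (z - q) >= 0) by nra.
        specialize (Gq ltac:(left; lra)). lra.
Qed.
Lemma telescope f x0 a N rho y m : Base f x0 a N -> code f a rho x0 N = 0 ->
  code_nondecreasing f a rho x0 N -> hull f x0 N y -> least_period f y m -> (2 <= m)%nat ->
  phi_sum f a y m >= INR m * rho.
Proof.
  intros B HN Hc Hy Hl H2.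
  assert (forall k, (k <= m)%nat -> Dx f a rho x0 N (itr f k y) >= Dx f a rho x0 N y + INR k * rho - phi_sum f a y k).
  { induction k; intros Hk.
    - simpl. lra.
    - specialize (IHk ltac:(lia)). cbn [phi_sum]. rewrite S_INR, itr_S.
      pose proof (key f x0 a N rho (itr f k y) B HN Hc (orbit_hull f x0 a N y B Hy k)
         (orbit_na f x0 a N y m B Hl H2 k ltac:(lia)) (orbit_na f x0 a N y m B Hl H2 (S k) Hk)).
      lra. }
  specialize (H m (le_n m)). destruct Hl as [_ [Hm _]]. rewrite Hm in H. lra.
Qed.

Theorem lemma3p3 (f : R -> R) (x0 a : R) (n r s : nat) :
  (1 < n)%nat -> Nat.gcd r s = 1%nat ->
  leftmost_cycle f x0 (n * s) ->
  orp f x0 (n * r) (n * s) ->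
  P_linear f x0 (n * s) ->
  convergent f x0 (n * s) ->
  (* a is the fixed point of the P-linear map (in the hull of P) *)
  f a = a ->
  (exists i j : nat, (i < n * s)%nat /\ (j < n * s)%nat /\
     itr f i x0 <= a <= itr f j x0) ->
  code_nondecreasing f a (INR (n * r) / INR (n * s)) x0 (n * s) ->
  forall (y : R) (m : nat),
    (exists i j : nat, (i < n * s)%nat /\ (j < n * s)%nat /\
       itr f i x0 <= y <= itr f j x0) ->
    least_period f y m -> (2 <= m)%nat ->
    ~ (over_rotation_number f y m < INR r / INR s).
Proof.
  intros Hn _ [Hlp _] [_ [HN2 Hcnt]] Hlin Hcv Hfa Ha Hc y m Hy Hly Hm2.
  set (N := (n * s)%nat) in *.
  assert (B : Base f x0 a N) by (constructor; auto).
  assert (Hx0 : hull f x0 N x0) by (exists 0%nat, 0%nat; repeat split; simpl; try lia; lra).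
  pose proof (count_eq f x0 a N x0 N B Hx0 Hlp HN2) as E0.
  rewrite Hcnt, mult_INR in E0. simpl (INR 2) in E0.
  assert (Ns : INR N <> 0) by (apply not_0_INR; lia).
  assert (HcN : code f a (INR (n * r) / INR N) x0 N = 0).
  { unfold code. assert (phi_sum f a x0 N = INR (n * r)) by lra. rewrite H. field. auto. }
  pose proof (telescope f x0 a N _ y m B HcN Hc Hy Hly Hm2) as T.
  pose proof (count_eq f x0 a N y m B Hy Hly Hm2) as Ey.
  assert (rr : INR (n * r) / INR N = INR r / INR s).
  { unfold N in *. rewrite !mult_INR in *. field. split.
    - apply not_0_INR. intro; subst s. lia.
    - apply not_0_INR. lia. }
  rewrite rr in T.
  unfold over_rotation_number. rewrite Ey.
  assert (mp : 0 < INR m) by (apply lt_0_INR; lia).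
  set (o := 2 * phi_sum f a y m / (2 * INR m)).
  assert (o * INR m = phi_sum f a y m) by (unfold o; field; lra).
  intro Hlt. assert (o * INR m < INR r / INR s * INR m) by (apply Rmult_lt_compat_r; auto). lra.
Qed.
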